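(* Let $n\ge 2$ and $\varphi$ a linear functional with $\varphi(e_i)=a_i$, $0<a_1<\dots<a_n$. The number of $\varphi$-monotone paths on $\diamond^n$ is $\dfrac{2^{2n-1}-2}{3}$.
   Context: $\diamond^n=\mathrm{conv}\{\pm e_1,\dots,\pm e_n\}$. A monotone path is a sequence of vertices $-e_n=v_0,v_1,\dots,v_m=e_n$ of $\diamond^n$ such that each $[v_{j-1},v_j]$ is an edge of $\diamond^n$ (i.e. $v_{j-1}\ne -v_j$) and $\varphi(v_{j-1})<\varphi(v_j)$ for all $j$. *)

(* Defs.v *)
From HB Require Import structures.
From mathcomp Require Import all_boot all_order all_algebra.
Set Implicit Arguments. Unset Strict Implicit. Unset Printing Implicit Defensive.
Import Order.TTheory GRing.Theory Num.Theory.
Local Open Scope ring_scope.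

(* Standard basis vector e_{k+1} of R^n (0-based index k : nat). *)
Definition evec (R : realFieldType) (n k : nat) : 'rV[R]_n :=
  \row_(j < n) ((nat_of_ord j == k)%:R : R).

Definition cross_vertex (R : realFieldType) (n : nat) (v : 'rV[R]_n) : bool :=
  [exists i : 'I_n, (v == evec R n i) || (v == - evec R n i)].

Definition phi (R : realFieldType) (n : nat) (a : 'I_n -> R) (v : 'rV[R]_n) : R :=
  \sum_(i < n) a i * v 0 i.

(* Monotone path: v_0 = -e_n, ..., v_m = e_n, all vertices, consecutive
   vertices form an edge (v_{j-1} <> -v_j) and phi strictly increases. *)
Definition monotone_path (R : realFieldType) (n : nat) (a : 'I_n -> R)
    (s : seq 'rV[R]_n) : Prop :=
  exists2 tl : seq 'rV[R]_n,
    s = (- evec R n n.-1) :: tl &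
    [/\ all (@cross_vertex R n) s,
        last (- evec R n n.-1) tl = evec R n n.-1 &
        path (fun x y => (x != - y) && (phi a x < phi a y))
             (- evec R n n.-1) tl].

(* Main.v *)
Require Import Defs.
From HB Require Import structures.
From mathcomp Require Import all_boot all_order all_algebra zify ring lra.
Import Order.TTheory GRing.Theory Num.Theory.
Local Open Scope ring_scope.
Set Implicit Arguments. Unset Strict Implicit.

Lemma phi_evec (R : realFieldType) n (a : 'I_n -> R) (i : 'I_n) :
  phi a (evec R n i) = a i.
Proof.
rewrite /phi (bigD1 i) //= mxE eqxx mulr1 big1 ?addr0 // => j hj.
rewrite mxE; case: eqP => [e|]; last by rewrite mulr0.
by case/eqP: hj; apply: val_inj.
Qed.

Lemma phiN (R : realFieldType) n (a : 'I_n -> R) v : phi a (- v) = - phi a v.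
Proof.
by rewrite /phi -sumrN; apply: eq_bigr => i _; rewrite mxE mulrN.
Qed.

Fixpoint idx (j : nat) (b : seq bool) : seq nat :=
 if b is c :: b' then (if c then j :: idx j.+1 b' else idx j.+1 b') else [::].

Lemma mem_idx j b i : (i \in idx j b) = (j <= i)%N && nth false b (i - j).
Proof.
elim: b j => [|c b IH] j /=; first by rewrite nth_nil andbF.
have H : (i \in idx j.+1 b) = (j < i)%N && nth false (c :: b) (i - j).
  rewrite IH; case: (ltngtP i j) => h //=.
  by have -> : (i - j = (i - j.+1).+1)%N by lia.
move: H; case: c => H; rewrite ?in_cons H; case: (ltngtP i j) => h //=.
all: try (have -> : (i == j) = false by apply/eqP; lia).
all: try (move: h => ->; rewrite ?eqxx ?subnn).
all: by [].
Qed.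

Lemma idx_path j b k : (k < j)%N -> path ltn k (idx j b).
Proof.
elim: b j k => [|c b IH] j k //= hk; case: c => /=; last by apply: IH; lia.
by rewrite hk; apply: IH.
Qed.

Lemma idx_sorted j b : sorted ltn (idx j b).
Proof.
elim: b j => [|c b IH] j //=; case: c => //=; exact: idx_path.
Qed.

Lemma head_idx j b : head (j + size b)%N (idx j b) = (j + find id b)%N.
Proof.
elim: b j => [|c b IH] j /=; first by rewrite !addn0.
case: c => /=; first by rewrite addn0.
by rewrite -addSnnS IH addSnnS.
Qed.

Lemma idx_rcons j b c :
  idx j (rcons b c) = idx j b ++ (if c then [:: (j + size b)%N] else [::]).
Proof.
elim: b j => [|d b IH] j /=; first by rewrite addn0; case: c.
by case: d => /=; rewrite IH addSnnS.
Qed.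

Lemma nth_false_size (b : seq bool) k : nth false b k -> (k < size b)%N.
Proof. by apply: contraTT; rewrite -leqNgt => h; rewrite nth_default. Qed.

Lemma idx_lt j b i : i \in idx j b -> (i < j + size b)%N.
Proof. by rewrite mem_idx => /andP[h /nth_false_size]; lia. Qed.

Lemma idx_ge j b i : i \in idx j b -> (j <= i)%N.
Proof. by rewrite mem_idx => /andP[]. Qed.


Lemma al_lt (R : realFieldType) n (a : 'I_n -> R)
  (Hinc : forall i j : 'I_n, (i < j)%N -> a i < a j) k j :
  (k < j)%N -> (j < n)%N -> phi a (evec R n k) < phi a (evec R n j).
Proof.
move=> hkj hj; have hk : (k < n)%N by lia.
have -> : evec R n k = evec R n (Ordinal hk) by [].
have -> : evec R n j = evec R n (Ordinal hj) by [].
by rewrite !phi_evec; apply: Hinc.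
Qed.

Lemma al_gt0 (R : realFieldType) n (a : 'I_n -> R)
  (Hpos : forall i : 'I_n, 0 < a i) k :
  (k < n)%N -> 0 < phi a (evec R n k).
Proof.
move=> hk; have -> : evec R n k = evec R n (Ordinal hk) by [].
by rewrite phi_evec.
Qed.

Lemma evec_inj (R : realFieldType) n (a : 'I_n -> R)
  (Hinc : forall i j : 'I_n, (i < j)%N -> a i < a j) k j :
  (k < n)%N -> (j < n)%N -> evec R n k = evec R n j -> k = j.
Proof.
move=> hk hj e; case: (ltngtP k j) => // h.
- by have := al_lt Hinc h hj; rewrite e ltxx.
- by have := al_lt Hinc h hk; rewrite e ltxx.
Qed.

Lemma neg_neq_pos (R : realFieldType) n (a : 'I_n -> R)
  (Hpos : forall i : 'I_n, 0 < a i) k j :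
  (k < n)%N -> (j < n)%N -> - evec R n k != evec R n j.
Proof.
move=> hk hj; apply/eqP => e.
have := al_gt0 Hpos hk; have := al_gt0 Hpos hj.
rewrite -e phiN; lra.
Qed.

Lemma last_rev' (T : Type) (x : T) s : last x (rev s) = head x s.
Proof. by case: s => //= y s; rewrite rev_cons last_rcons. Qed.

Definition posv (R : realFieldType) n k : 'rV[R]_n := evec R n k.
Definition negv (R : realFieldType) n k : 'rV[R]_n := - evec R n k.
Definition ant (R : realFieldType) n (u v : 'rV[R]_n) := u != - v.

Definition build (R : realFieldType) n (x y : seq bool) :=
  rev (map (negv R n) (idx 0 (rcons x true))) ++ map (posv R n) (idx 0 (rcons y true)).
Definition tlb (R : realFieldType) n (x y : seq bool) :=
  rev (map (negv R n) (idx 0 x)) ++ map (posv R n) (idx 0 (rcons y true)).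

Lemma build_eq (R : realFieldType) n x y : size x = n.-1 ->
  build R n x y = negv R n n.-1 :: tlb R n x y.
Proof.
by move=> sx; rewrite /build /tlb idx_rcons cats1 map_rcons rev_rcons sx.
Qed.

Lemma negpath (R : realFieldType) n (a : 'I_n -> R)
  (Hpos : forall i : 'I_n, 0 < a i) l k :
  (k < n)%N -> all (fun i => i < n)%N l -> path (@ant R n) (negv R n k) (map (negv R n) l).
Proof.
elim: l k => [|i l IH] k //= hk /andP[hi hl].
by rewrite IH // andbT /ant /negv opprK (neg_neq_pos Hpos).
Qed.

Lemma pospath (R : realFieldType) n (a : 'I_n -> R)
  (Hpos : forall i : 'I_n, 0 < a i) l k :
  (k < n)%N -> all (fun i => i < n)%N l -> path (@ant R n) (posv R n k) (map (posv R n) l).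
Proof.
elim: l k => [|i l IH] k //= hk /andP[hi hl].
by rewrite IH // andbT /ant /posv eq_sym (neg_neq_pos Hpos).
Qed.

Lemma all_idx n j b : (j + size b <= n)%N -> all (fun i => i < n)%N (idx j b).
Proof. by move=> h; apply/allP => i /idx_lt; lia. Qed.

Lemma rcons_head (l : seq nat) m : rcons l m = head m l :: behead (rcons l m).
Proof. by case: l. Qed.

Lemma antipath (R : realFieldType) n (a : 'I_n -> R)
  (Hpos : forall i : 'I_n, 0 < a i)
  (Hinc : forall i j : 'I_n, (i < j)%N -> a i < a j) x y :
  (0 < n)%N -> size x = n.-1 -> size y = n.-1 ->
  path (@ant R n) (negv R n n.-1) (tlb R n x y) = (find id x != find id y).
Proof.
move=> n0 sx sy.
have hM : (n.-1 < n)%N by lia.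
have hx : all (fun i => i < n)%N (idx 0 x) by apply: all_idx; lia.
have hy : all (fun i => i < n)%N (idx 0 (rcons y true)).
  by apply: all_idx; rewrite size_rcons; lia.
rewrite /tlb -map_rev cat_path (negpath Hpos) ?all_rev //= last_map last_rev'.
rewrite idx_rcons cats1 sy rcons_head /=.
have e1 : head n.-1 (idx 0 x) = find id x by rewrite -sx -[size x]add0n head_idx.
have e2 : head n.-1 (idx 0 y) = find id y by rewrite -sy -[size y]add0n head_idx.
rewrite e1 e2.
have hfx : (find id x < n)%N by have := find_size id x; lia.
have hfy : (find id y < n)%N by have := find_size id y; lia.
rewrite (pospath Hpos) ?andbT; last first.
- move: hy; rewrite idx_rcons cats1 sy rcons_head e2 /= => /andP[_].
  by [].
- by [].
rewrite /ant /negv /posv.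
apply/idP/idP => [/eqP h|/eqP h]; apply/eqP => e.
- by apply: h; rewrite e.
- by apply: h; apply: (evec_inj Hinc hfx hfy); apply: oppr_inj.
Qed.

Lemma sorted_sep (R : realFieldType) (s1 s2 : seq R) :
  sorted <%R s1 -> sorted <%R s2 -> all (fun z => z < 0) s1 -> all (fun z => 0 < z) s2 ->
  sorted <%R (s1 ++ s2).
Proof.
case: s1 => [|h t] //= p1 p2 /andP[h0 a1] a2.
rewrite cat_path p1 /=; case: s2 p2 a2 => [|h2 t2] //= p2 /andP[h20 _].
rewrite p2 andbT; apply: (@lt_trans _ _ 0) => //.
by have := mem_last h t; rewrite in_cons => /orP[/eqP -> //|/(allP a1)].
Qed.

Lemma build_sorted (R : realFieldType) n (a : 'I_n -> R)
  (Hpos : forall i : 'I_n, 0 < a i)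
  (Hinc : forall i j : 'I_n, (i < j)%N -> a i < a j) x y :
  (0 < n)%N -> size x = n.-1 -> size y = n.-1 ->
  sorted (fun u v => phi a u < phi a v) (build R n x y).
Proof.
move=> n0 sx sy.
have hx : all (fun i => i < n)%N (idx 0 (rcons x true)).
  by apply: all_idx; rewrite size_rcons; lia.
have hy : all (fun i => i < n)%N (idx 0 (rcons y true)).
  by apply: all_idx; rewrite size_rcons; lia.
have : sorted <%R (map (phi a) (build R n x y)).
  rewrite /build map_cat map_rev -!map_comp; apply: sorted_sep.
  - rewrite rev_sorted; apply: (homo_sorted_in _ hx (idx_sorted _ _)).
    move=> i j hi hj hij /=; rewrite /negv !phiN ltrN2.
    exact: (al_lt Hinc hij hj).
  - apply: (homo_sorted_in _ hy (idx_sorted _ _)).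
    move=> i j hi hj hij /=; exact: (al_lt Hinc hij hj).
  - rewrite all_rev; apply/allP => z /mapP [i /(allP hx) hi ->] /=.
    by rewrite /negv phiN oppr_lt0 (al_gt0 Hpos).
  - apply/allP => z /mapP [i /(allP hy) hi ->] /=.
    by rewrite /posv (al_gt0 Hpos).
by rewrite sorted_map.
Qed.

Lemma path_and (T : Type) (P Q : T -> T -> bool) z s :
  path (fun u v => P u v && Q u v) z s = path P z s && path Q z s.
Proof. by elim: s z => //= y s IH z; rewrite IH andbACA. Qed.

Lemma mem_idx0 b i : (i \in idx 0 b) = nth false b i.
Proof. by rewrite mem_idx subn0. Qed.

Lemma build_elems (R : realFieldType) n x y u :
  size x = n.-1 -> size y = n.-1 -> (0 < n)%N ->
  u \in build R n x y -> exists i, (i < n)%N /\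
   ((u = negv R n i /\ nth false (rcons x true) i) \/
    (u = posv R n i /\ nth false (rcons y true) i)).
Proof.
move=> sx sy n0; rewrite /build mem_cat mem_rev => /orP[]/mapP[i hi ->];
  rewrite mem_idx0 in hi; exists i; (split; [|by [left|right]]);
  move/nth_false_size: hi; rewrite size_rcons; lia.
Qed.

Lemma negv_in_build (R : realFieldType) n x y i :
  nth false (rcons x true) i -> negv R n i \in build R n x y.
Proof.
by move=> h; rewrite /build mem_cat mem_rev map_f // mem_idx0.
Qed.

Lemma posv_in_build (R : realFieldType) n x y i :
  nth false (rcons y true) i -> posv R n i \in build R n x y.
Proof.
by move=> h; rewrite /build mem_cat map_f ?orbT // mem_idx0.
Qed.

Lemma negv_in_buildE (R : realFieldType) n (a : 'I_n -> R)
  (Hpos : forall i : 'I_n, 0 < a i)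
  (Hinc : forall i j : 'I_n, (i < j)%N -> a i < a j) x y i :
  size x = n.-1 -> size y = n.-1 -> (0 < n)%N -> (i < n)%N ->
  (negv R n i \in build R n x y) = nth false (rcons x true) i.
Proof.
move=> sx sy n0 hi; apply/idP/idP; last exact: negv_in_build.
case/(build_elems sx sy n0) => j [hj [[e h]|[e h]]].
- by have := evec_inj Hinc hi hj (oppr_inj e) => ->.
- by move: (neg_neq_pos Hpos hi hj); rewrite /negv /posv in e; rewrite e eqxx.
Qed.

Lemma posv_in_buildE (R : realFieldType) n (a : 'I_n -> R)
  (Hpos : forall i : 'I_n, 0 < a i)
  (Hinc : forall i j : 'I_n, (i < j)%N -> a i < a j) x y i :
  size x = n.-1 -> size y = n.-1 -> (0 < n)%N -> (i < n)%N ->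
  (posv R n i \in build R n x y) = nth false (rcons y true) i.
Proof.
move=> sx sy n0 hi; apply/idP/idP; last exact: posv_in_build.
case/(build_elems sx sy n0) => j [hj [[e h]|[e h]]].
- by move: (neg_neq_pos Hpos hj hi); rewrite /negv /posv in e; rewrite -e eqxx.
- by have := evec_inj Hinc hi hj e => ->.
Qed.

Lemma build_monotone (R : realFieldType) n (a : 'I_n -> R)
  (Hpos : forall i : 'I_n, 0 < a i)
  (Hinc : forall i j : 'I_n, (i < j)%N -> a i < a j) x y :
  (0 < n)%N -> size x = n.-1 -> size y = n.-1 -> find id x != find id y ->
  monotone_path a (build R n x y).
Proof.
move=> n0 sx sy g; exists (tlb R n x y); first exact: build_eq.
split.
- apply/allP => u /(build_elems sx sy n0) [i [hi [[-> _]|[-> _]]]];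
  apply/existsP; exists (Ordinal hi); by rewrite eqxx ?orbT.
- by rewrite /tlb idx_rcons cats1 map_rcons last_cat last_rcons sy.
- rewrite (path_and (fun u v => u != - v) (fun u v => phi a u < phi a v)).
  apply/andP; split; first by have := antipath Hpos Hinc n0 sx sy; rewrite /ant => ->.
  by have := build_sorted Hpos Hinc n0 sx sy; rewrite build_eq.
Qed.

Lemma monotone_build (R : realFieldType) n (a : 'I_n -> R)
  (Hpos : forall i : 'I_n, 0 < a i)
  (Hinc : forall i j : 'I_n, (i < j)%N -> a i < a j) s :
  (1 < n)%N -> monotone_path a s ->
  exists x y, [/\ size x = n.-1, size y = n.-1, find id x != find id y &
                  s = build R n x y].
Proof.
move=> n1 [tl -> [hall hlast hpath]].
set S := - evec R n n.-1 :: tl.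
have n0 : (0 < n)%N by lia.
pose x := [seq negv R n i \in S | i <- iota 0 n.-1].
pose y := [seq posv R n i \in S | i <- iota 0 n.-1].
have sx : size x = n.-1 by rewrite size_map size_iota.
have sy : size y = n.-1 by rewrite size_map size_iota.
have nx i : (i < n.-1)%N -> nth false x i = (negv R n i \in S).
  by move=> hi; rewrite (nth_map 0) ?size_iota // nth_iota.
have ny i : (i < n.-1)%N -> nth false y i = (posv R n i \in S).
  by move=> hi; rewrite (nth_map 0) ?size_iota // nth_iota.
have posM : posv R n n.-1 \in S.
  by rewrite /posv -hlast; apply: mem_last.
have negM : negv R n n.-1 \in S by rewrite mem_head.
move: hpath; rewrite (path_and (fun u v => u != - v) (fun u v => phi a u < phi a v)).
case/andP=> hant hphi.
have eS : S = build R n x y.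
  apply: (@irr_sorted_eq _ (fun u v => phi a u < phi a v)).
  - by move=> u v w; apply: lt_trans.
  - by move=> u; rewrite ltxx.
  - exact: hphi.
  - exact: build_sorted.
  move=> u; apply/idP/idP.
  + move=> hu; have := allP hall u hu => /existsP [i /orP[]/eqP eu].
    * change (u = posv R n i) in eu; rewrite eu; apply: posv_in_build.
      rewrite nth_rcons sy; case: ifP => hi; first by rewrite ny // -eu.
      move/negbT: hi; rewrite -leqNgt => hi; have := ltn_ord i => hi2; rewrite ifT //; apply/eqP; lia.
    * change (u = negv R n i) in eu; rewrite eu; apply: negv_in_build.
      rewrite nth_rcons sx; case: ifP => hi; first by rewrite nx // -eu.
      move/negbT: hi; rewrite -leqNgt => hi; have := ltn_ord i => hi2; rewrite ifT //; apply/eqP; lia.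
  + case/(build_elems sx sy n0) => i [hi [[-> h]|[-> h]]].
    * move: h; rewrite nth_rcons sx; case: ifP => hi'; first by rewrite nx.
      by case: eqP => // ->.
    * move: h; rewrite nth_rcons sy; case: ifP => hi'; first by rewrite ny.
      by case: eqP => // ->.
exists x, y; split => //.
move: (eS); rewrite build_eq // => -[etl].
by rewrite -(antipath Hpos Hinc n0 sx sy) -etl.
Qed.

Fixpoint allbits k : seq (seq bool) :=
  if k is k'.+1 then map (cons true) (allbits k') ++ map (cons false) (allbits k')
  else [:: [::]].

Lemma mem_map_cons (c d : bool) b s :
  (c :: b \in [seq d :: i | i <- s]) = (c == d) && (b \in s).
Proof.
apply/mapP/andP => [[b' hb [-> ->]]|[/eqP -> hb]]; last by exists b.
by rewrite eqxx.
Qed.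

Lemma mem_allbits k b : (b \in allbits k) = (size b == k).
Proof.
elim: k b => [|k IH] [|c b] //=; rewrite mem_cat.
- by apply/negbTE; rewrite negb_or; apply/andP; split; apply/mapP => -[].
- by rewrite !mem_map_cons IH; case: c => /=; rewrite ?orbF.
Qed.

Lemma uniq_allbits k : uniq (allbits k).
Proof.
elim: k => //= k IH; rewrite cat_uniq !map_inj_uniq ?IH //=; try by move=> u v [].
by rewrite andbT; apply/hasPn => z /mapP [b _ ->]; apply/mapP => -[] ? _ [].
Qed.

Lemma size_allbits k : size (allbits k) = (2 ^ k)%N.
Proof. by elim: k => //= k IH; rewrite size_cat !size_map IH expnS mul2n addnn. Qed.

Definition goodb (x y : seq bool) := find id x != find id y.

Fixpoint cntp (s t : seq (seq bool)) : nat :=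
  if s is x :: s' then (count (goodb x) t + cntp s' t)%N else 0%N.

Lemma count_allpairs s t :
  count (fun p => goodb p.1 p.2) [seq (x, y) | x <- s, y <- t] = cntp s t.
Proof. by elim: s => //= x s IH; rewrite count_cat count_map IH. Qed.

Lemma cntp_cat s1 s2 t : cntp (s1 ++ s2) t = (cntp s1 t + cntp s2 t)%N.
Proof. by elim: s1 => //= x s IH; rewrite IH addnA. Qed.

Lemma cnt_tt x B : count (goodb (true :: x)) (map (cons true) B) = 0%N.
Proof. by elim: B. Qed.
Lemma cnt_tf x B : count (goodb (true :: x)) (map (cons false) B) = size B.
Proof. by elim: B => //= y B ->. Qed.
Lemma cnt_ft x B : count (goodb (false :: x)) (map (cons true) B) = size B.
Proof. by elim: B => //= y B ->. Qed.
Lemma cnt_ff x B : count (goodb (false :: x)) (map (cons false) B) = count (goodb x) B.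
Proof. by elim: B => //= y B ->. Qed.

Lemma cntp_true S B :
  cntp (map (cons true) S) (map (cons true) B ++ map (cons false) B) = (size S * size B)%N.
Proof. by elim: S => //= x S ->; rewrite count_cat cnt_tt cnt_tf. Qed.

Lemma cntp_false S B :
  cntp (map (cons false) S) (map (cons true) B ++ map (cons false) B)
  = (size S * size B + cntp S B)%N.
Proof.
elim: S => //= x S ->; rewrite count_cat cnt_ft cnt_ff mulSn; lia.
Qed.

Lemma cnt_formula k :
  (3 * cntp (allbits k) (allbits k) + 2 = 2 * (2 ^ k * 2 ^ k))%N.
Proof.
elim: k => //= k IH.
rewrite cntp_cat cntp_true cntp_false size_allbits expnS.
move: IH; set c := cntp _ _; set X := (2 ^ k)%N; nia.
Qed.

Lemma mem_pairs_size k (p : seq bool * seq bool) :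
  p \in [seq (x, y) | x <- allbits k, y <- allbits k] -> size p.1 = k /\ size p.2 = k.
Proof.
by case/allpairsP => -[u v] [/= hu hv ->] /=; move: hu hv; rewrite !mem_allbits => /eqP-> /eqP->.
Qed.

Unset Implicit Arguments.

Theorem theorem1p1 (R : realFieldType) (n : nat) (a : 'I_n -> R) :
  (2 <= n)%N ->
  (forall i : 'I_n, 0 < a i) ->
  (forall i j : 'I_n, (i < j)%N -> a i < a j) ->
  exists L : seq (seq 'rV[R]_n),
    [/\ uniq L,
        (forall s, s \in L <-> monotone_path a s) &
        size L = ((2 ^ (2 * n - 1) - 2) %/ 3)%N].
Proof.
move=> n2 Hpos Hinc.
have n0 : (0 < n)%N by lia.
set P := [seq (x, y) | x <- allbits n.-1, y <- allbits n.-1].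
exists [seq build R n p.1 p.2 | p <- P & goodb p.1 p.2]; split.
- rewrite map_inj_in_uniq; last first.
    move=> [p1 p2] [q1 q2]; rewrite !mem_filter => /andP[_ /mem_pairs_size [sp1 sp2]].
    move=> /andP[_ /mem_pairs_size [sq1 sq2]] e.
    have key (b c : seq bool) :
      size b = n.-1 -> size c = n.-1 ->
      (forall i, (i < n.-1)%N -> nth false b i = nth false c i) -> b = c.
      move=> sb sc h; apply: (eq_from_nth (x0 := false)); first by rewrite sb sc.
      by move=> i; rewrite sb => /h.
    rewrite /= in sp1 sp2 sq1 sq2 e.
    have hi i : (i < n.-1)%N -> (i < n)%N by lia.
    congr pair; apply: key => // i hin.
    + have := negv_in_buildE Hpos Hinc sp1 sp2 n0 (hi _ hin).
      rewrite e (negv_in_buildE Hpos Hinc sq1 sq2 n0 (hi _ hin)) !nth_rcons sp1 sq1 hin => ->.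
      by [].
    + have := posv_in_buildE Hpos Hinc sp1 sp2 n0 (hi _ hin).
      rewrite e (posv_in_buildE Hpos Hinc sq1 sq2 n0 (hi _ hin)) !nth_rcons sp2 sq2 hin => ->.
      by [].
  apply: filter_uniq; apply: allpairs_uniq; rewrite ?uniq_allbits //.
  by move=> [u v] [u' v'] _ _ /= [-> ->].
- move=> s; split.
  + case/mapP => -[x y]; rewrite mem_filter => /andP[g /mem_pairs_size [sx sy]] /= ->.
    exact: build_monotone.
  + case/(monotone_build Hpos Hinc n2) => x [y [sx sy g ->]].
    apply/mapP; exists (x, y) => //; rewrite mem_filter /goodb g /=.
    by apply: allpairs_f; rewrite mem_allbits; apply/eqP.
- rewrite size_map size_filter count_allpairs.
  have := cnt_formula n.-1.
  have -> : (2 * n - 1 = (n.-1).+1 + n.-1)%N by lia.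
  rewrite expnD expnS mulnA => <-.
  by rewrite addnK mulKn.
Qed.
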